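(* In the setting described in the context, let $\varepsilon=\epsilon e$ with $e=(1,\dots,1)\in\mathbb{R}^p$, suppose Algorithm Solve(QVP) with tolerance $\epsilon$ terminates at iteration $K$, and let $\mathcal{L}=\mathcal{N}(\mathcal{Y}_{WN})$ and $\mathcal{U}=\mathcal{N}(V_\varepsilon)=\mathcal{P}^K$. Then (i) $\mathcal{L}\subseteq\mathcal{Y}^{\diamond}\subseteq\mathcal{U}$; (ii) ${\rm WMin}\,\mathcal{Y}^{\diamond}\subseteq\mathcal{U}_\varepsilon\cap\mathcal{Y}^{\diamond}\subseteq\mathcal{Y}^{\diamond}_\varepsilon$; (iii) ${\rm WMin}\,\mathcal{L}\subseteq\mathcal{Y}^{\diamond}_\varepsilon$.
   Context: Setting: $\mathcal{S}\subset\mathbb{R}^n$ nonempty convex compact; $f=(f_1,\dots,f_p):\mathbb{R}^n\to\mathbb{R}^p$ ($p\ge2$), each $f_i$ strictly quasiconvex on $\mathcal{S}$ (continuous and $h(x^1)<h(x^2)\Rightarrow h(\lambda x^1+(1-\lambda)x^2)<h(x^2)$ for $0<\lambda<1$). Vector inequalities are componentwise, $[a,b]=\{z:a\le z\le b\}$, $e^i$ the $i$-th unit vector. $\mathcal{Y}=f(\mathcal{S})$, $\mathcal{Y}^+=\mathcal{Y}+\mathbb{R}^p_+$. $m_i=\min_{x\in\mathcal{S}}f_i(x)$ (assume $m\notin\mathcal{Y}$); $M\in\mathbb{R}^p$ with $M_i\ge\max_{x\in\mathcal{S}}f_i(x)$ (constructed as the max of $f_i$ over the vertices of a simplex containing $\mathcal{S}$).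 $\mathcal{Y}^{\diamond}=\mathcal{Y}^+\cap(M-\mathbb{R}^p_+)$. For $Q\subset\mathbb{R}^p$: ${\rm WMin}\,Q=\{q\in Q:(q-\operatorname{int}\mathbb{R}^p_+)\cap Q=\emptyset\}$ and $Q_\varepsilon=\{q\in Q:(q-\varepsilon-\operatorname{int}\mathbb{R}^p_+)\cap Q=\emptyset\}$. For $Q\subset[m,M]$, the conormal hull is $\mathcal{N}(Q)=(Q+\mathbb{R}^p_+)\cap(M-\mathbb{R}^p_+)$ (the smallest set containing $Q$ such that $[y,M]$ lies in it for each of its points $y$). Fix $\hat d>0$; $(P^2(v))$ is $\min_{x\in\mathcal{S}}\max_j (f_j(x)-v_j)/\hat d_j$. A vertex $v$ of a finite set $V$ is proper if no other $v'\in V$, $v'\ne v$, satisfies $v'\le v$. Algorithm Solve(QVP) with tolerance $\epsilon\ge0$: $V^0=\{m\}$, $V_\varepsilon=\emptyset$, $\mathcal{Y}_{WN}=\emptyset$, $k=0$. While $V^k\setminus V_\varepsilon\ne\emptyset$: choose $v^k\in V^k\setminus V_\varepsilon$, solve $(P^2(v^k))$ with optimal $(x^k,t_k)$, set $w^k=v^k+t_k\hat d$, add $f(x^k)$ to $\mathcal{Y}_{WN}$; if $\|w^k-v^k\|\le\epsilon$, add $v^k$ to $V_\varepsilon$ and repeat the loop (without changing $k$); otherwise set $V^{k+1}=(V^k\setminus\{v^k\})\cup\{v^k+(w^k_i-v^k_i)e^i:i=1,\dots,p\}$, remove improper elements, and increase $k$ by one. $\mathcal{P}^k=\bigcup_{v\in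 V^k}[v,M]$. *)

(* Defs.v *)
(* Points of R^k are row vectors 'rV[R]_k,
   the i-th coordinate of y is y ord0 i. *)
From mathcomp Require Import all_boot all_algebra all_classical all_reals all_analysis.
Import GRing.Theory Num.Theory numFieldNormedType.Exports.
Set Implicit Arguments. Unset Strict Implicit. Unset Printing Implicit Defensive.
Local Open Scope ring_scope.
Local Open Scope classical_set_scope.

Section QVP.
Variable R : realType.

Definition vle (p : nat) (a b : 'rV[R]_p) := forall i : 'I_p, a ord0 i <= b ord0 i.
Definition vlt (p : nat) (a b : 'rV[R]_p) := forall i : 'I_p, a ord0 i < b ord0 i.

Definition enorm (p : nat) (a : 'rV[R]_p) := Num.sqrt (\sum_(i < p) (a ord0 i) ^+ 2).

Definition strictly_quasiconvex_on (n : nat) (S : set 'rV[R]_n) (h : 'rV[R]_n -> R) :=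
  {within S, continuous h} /\
  forall x1 x2 (l : R), S x1 -> S x2 -> 0 < l -> l < 1 ->
    h x1 < h x2 -> h (l *: x1 + (1 - l) *: x2) < h x2.

Definition Yplus (n p : nat) (S : set 'rV[R]_n) (f : 'rV[R]_n -> 'rV[R]_p) : set 'rV[R]_p :=
  [set y | exists2 x, S x & vle (f x) y].

Definition Ydiamond (n p : nat) (S : set 'rV[R]_n) (f : 'rV[R]_n -> 'rV[R]_p) (M : 'rV[R]_p) :=
  Yplus S f `&` [set y | vle y M].

Definition WMin (p : nat) (Q : set 'rV[R]_p) : set 'rV[R]_p :=
  [set q | Q q /\ ~ (exists2 q', Q q' & vlt q' q)].

Definition eps_min (p : nat) (eps : 'rV[R]_p) (Q : set 'rV[R]_p) : set 'rV[R]_p :=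
  [set q | Q q /\ ~ (exists2 q', Q q' & vlt q' (q - eps))].

Definition conormal (p : nat) (M : 'rV[R]_p) (Q : set 'rV[R]_p) : set 'rV[R]_p :=
  [set y | (exists2 q, Q q & vle q y) /\ vle y M].

Definition boxes_union (p : nat) (V : set 'rV[R]_p) (M : 'rV[R]_p) : set 'rV[R]_p :=
  [set y | exists2 v, V v & (vle v y /\ vle y M)].

(* (x, t) is an optimal solution of (P^2(v)):
   min t  s.t.  x in S,  f(x) - v <= t * dhat
   (epigraph form of  min_{x in S} max_j (f_j(x) - v_j) / dhat_j, dhat > 0) *)
Definition P2_feasible (n p : nat) (S : set 'rV[R]_n) (f : 'rV[R]_n -> 'rV[R]_p)
  (dhat v : 'rV[R]_p) (x : 'rV[R]_n) (t : R) :=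
  S x /\ forall j : 'I_p, (f x ord0 j - v ord0 j) / dhat ord0 j <= t.

Definition P2_optimal (n p : nat) (S : set 'rV[R]_n) (f : 'rV[R]_n -> 'rV[R]_p)
  (dhat v : 'rV[R]_p) (x : 'rV[R]_n) (t : R) :=
  P2_feasible S f dhat v x t /\
  forall y s, P2_feasible S f dhat v y s -> t <= s.

Record alg_state (p : nat) := AlgState {
  st_V : set 'rV[R]_p;
  st_Veps : set 'rV[R]_p;
  st_YWN : set 'rV[R]_p }.

Definition refine_vertices (p : nat) (V : set 'rV[R]_p) (v w : 'rV[R]_p) : set 'rV[R]_p :=
  let W := (V `\ v) `|`
           range (fun i : 'I_p => v + (w ord0 i - v ord0 i) *: delta_mx ord0 i) in
  [set u | W u /\ forall u', W u' -> vle u' u -> u' = u].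

(* one pass of the while loop; the nat is the iteration counter k *)
Inductive alg_step (n p : nat) (S : set 'rV[R]_n) (f : 'rV[R]_n -> 'rV[R]_p)
    (dhat : 'rV[R]_p) (eps : R) : alg_state p -> nat -> alg_state p -> nat -> Prop :=
| step_eps (s : alg_state p) (k : nat) v x t :
    st_V s v -> ~ st_Veps s v -> P2_optimal S f dhat v x t ->
    enorm ((v + t *: dhat) - v) <= eps ->
    alg_step S f dhat eps s k
      (AlgState (st_V s) (st_Veps s `|` [set v]) (st_YWN s `|` [set f x])) k
| step_refine (s : alg_state p) (k : nat) v x t :
    st_V s v -> ~ st_Veps s v -> P2_optimal S f dhat v x t ->
    eps < enorm ((v + t *: dhat) - v) ->
    alg_step S f dhat eps s k
      (AlgState (refine_vertices (st_V s) v (v + t *: dhat)) (st_Veps s)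
                (st_YWN s `|` [set f x])) k.+1.

Inductive alg_run (n p : nat) (S : set 'rV[R]_n) (f : 'rV[R]_n -> 'rV[R]_p)
    (dhat : 'rV[R]_p) (eps : R) : alg_state p -> nat -> alg_state p -> nat -> Prop :=
| run_refl s k : alg_run S f dhat eps s k s k
| run_step s k s' k' s'' k'' :
    alg_step S f dhat eps s k s' k' -> alg_run S f dhat eps s' k' s'' k'' ->
    alg_run S f dhat eps s k s'' k''.

Definition alg_init (p : nat) (m : 'rV[R]_p) : alg_state p :=
  AlgState [set m] set0 set0.

End QVP.

(* Main.v *)
Require Import Defs.
From mathcomp Require Import all_boot all_algebra all_classical all_reals all_analysis.
From mathcomp Require Import lra.
Import GRing.Theory Num.Theory numFieldNormedType.Exports order.Order.Theory.
Set Implicit Arguments. Unset Strict Implicit.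
Local Open Scope ring_scope.
Local Open Scope classical_set_scope.

Section Aux.
Variable R : realType.
Variable p : nat.
Implicit Types a b c u v : 'rV[R]_p.

Lemma vle_refl a : vle a a. Proof. by move=> i. Qed.
Lemma vle_trans a b c : vle a b -> vle b c -> vle a c.
Proof. by move=> h1 h2 i; exact: le_trans (h1 i) (h2 i). Qed.
Lemma vle_anti a b : vle a b -> vle b a -> a = b.
Proof. move=> h1 h2; apply/rowP => i; apply/le_anti; by rewrite h1 h2. Qed.

Lemma coord_le_enorm a (j : 'I_p) : `|a ord0 j| <= enorm a.
Proof.
rewrite /enorm -sqrtr_sqr ler_sqrt; last by apply: sumr_ge0 => i _; exact: sqr_ge0.
by rewrite (bigD1 j) //= lerDl; apply: sumr_ge0 => i _; exact: sqr_ge0.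
Qed.

Lemma minex (s : seq 'rV[R]_p) : forall (W : set 'rV[R]_p) u, W `<=` [set` s] -> W u ->
  exists u0, [/\ W u0, vle u0 u & forall u', W u' -> vle u' u0 -> u' = u0].
Proof.
elim: s => [|a s IH] W u sub Wu.
  by have := sub _ Wu.
have sub' : (W `\ a) `<=` [set` s].
  move=> x [Wx xa]; have := sub _ Wx; rewrite /= in_cons => /orP[/eqP//|//].
case: (pselect (exists2 u1, (W `\ a) u1 & vle u1 u)) => [[u1 Wu1 u1u]|nex].
  have [u0 [W'u0 u0u1 min0]] := IH _ _ sub' Wu1.
  case: (pselect ([/\ W a, vle a u0 & a != u0])) => [[Wa au0 an]|na].
    exists a; split => //; first exact: vle_trans au0 (vle_trans u0u1 u1u).
    move=> u' Wu' u'a; case: (pselect (u' = a)) => // u'na.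
    have e : u' = u0 by apply: min0 => //; exact: vle_trans u'a au0.
    subst u'; exfalso; move/eqP: an; apply; exact: vle_anti au0 u'a.
  exists u0; split; [by case: W'u0 | exact: vle_trans u0u1 u1u |].
  move=> u' Wu' u'u0; case: (pselect (u' = a)) => [eua|u'na]; last by apply: min0.
  subst u'; case: (eqVneq a u0) => // an; exfalso; apply: na; split => //.
have ua : u = a.
  apply: contrapT => una; apply: nex; exists u; [by split | exact: vle_refl].
subst u; exists a; split => //.
move=> u' Wu' u'a; apply: contrapT => u'na; apply: nex; exists u'; [by split | done].
Qed.

Lemma key n (S : set 'rV[R]_n) (f : 'rV[R]_n -> 'rV[R]_p) d v x t y0 :
  (0 < p)%N -> vlt 0 d -> P2_optimal S f d v x t -> S y0 ->
  exists j, v ord0 j + t * d ord0 j <= f y0 ord0 j.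
Proof.
move=> p0 d0 [_ opt] Sy0.
pose g j := (f y0 ord0 j - v ord0 j) / d ord0 j.
have [j _ Hj] := @order.Order.TotalTheory.arg_maxP _ _ _ (Ordinal p0) xpredT g isT.
exists j.
have tle : t <= g j by apply: (opt y0); split => // k; exact: Hj.
have dj : 0 < d ord0 j by have := d0 j; rewrite mxE.
move: tle; rewrite /g ler_pdivlMr // => h; lra.
Qed.

Record Inv n (S : set 'rV[R]_n) f eps (s : alg_state R p) : Prop := {
  i_fin : exists sq : seq 'rV[R]_p, st_V s `<=` [set` sq];
  i_anti : forall u u', st_V s u -> st_V s u' -> vle u' u -> u' = u;
  i_epsV : st_Veps s `<=` st_V s;
  i_ywn : st_YWN s `<=` f @` S;
  i_cert : forall u, st_Veps s u -> exists2 x, S x &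
      st_YWN s (f x) /\ forall j, f x ord0 j <= u ord0 j + eps;
  i_cov : forall y, Yplus S f y -> exists2 v, st_V s v & vle v y;
  i_no : forall u x, st_V s u -> S x -> ~ vlt (f x) u }.


Lemma zE (v d : 'rV[R]_p) t (i j : 'I_p) :
  (v + ((v + t *: d) ord0 i - v ord0 i) *: delta_mx ord0 i) ord0 j =
  if i == j then v ord0 j + t * d ord0 j else v ord0 j.
Proof.
rewrite !mxE eqxx /=; have [->|ij] := eqVneq i j; rewrite ?eqxx ?mulr1 ?mulr0 ?addr0 //=.
lra.
Qed.

Lemma step_inv n (S : set 'rV[R]_n) f d eps s k s' k' :
  (0 < p)%N -> vlt 0 d ->
  alg_step S f d eps s k s' k' -> Inv S f eps s -> Inv S f eps s'.
Proof.
move=> p0 d0 st; case: st => {s' k' s k} s0 k0 v x t Vv nVe opt.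
-
  move=> hn [Hfin Hanti HepsV HYWN Hcert Hcov Hno]; constructor => //=.
  + by move=> u [/HepsV|->].
  + move=> y [/HYWN//|->]; exists x => //; by case: opt => [[]].
  + move=> u [Hu|->].
      by have [x0 Sx0 [Y0 h0]] := Hcert _ Hu; exists x0 => //; split => //; left.
    case: opt => [[Sx fe] _]; exists x => //; split; first by right.
    move=> j; have dj : 0 < d ord0 j by have := d0 j; rewrite mxE.
    have := fe j; rewrite ler_pdivrMr // => h1.
    have := coord_le_enorm (v + t *: d - v) j.
    rewrite (addrC v) addrK mxE => h2.
    have h3 := ler_norm (t * d ord0 j).
    rewrite (addrC v) addrK in hn; lra.
-
  move=> hn [Hfin Hanti HepsV HYWN Hcert Hcov Hno].
  set z := fun i : 'I_p => v + ((v + t *: d) ord0 i - v ord0 i) *: delta_mx ord0 i.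
  set W := (st_V s0 `\ v) `|` range z.
  have V'W : refine_vertices (st_V s0) v (v + t *: d) `<=` W by move=> u [].
  have [sq Hsq] := Hfin.
  have Wfin : W `<=` [set` (sq ++ map z (enum 'I_p))].
    move=> u [[/Hsq Hu _]|[i _ <-]]; rewrite /= mem_cat; apply/orP; [left|right] => //.
    by apply: map_f; rewrite mem_enum.
  have t0 : 0 <= t.
    rewrite leNgt; apply/negP => tn; apply: (Hno v x Vv); first by case: opt => [[]].
    move=> j; have dj : 0 < d ord0 j by have := d0 j; rewrite mxE.
    case: opt => [[_ fe] _]; have := fe j; rewrite ler_pdivrMr // => h1.
    have : t * d ord0 j < 0 by rewrite pmulr_llt0.
    lra.
  have zge : forall i, vle v (z i).
    move=> i j; rewrite /z zE; case: eqP => _ //.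
    have dj : 0 < d ord0 j by have := d0 j; rewrite mxE.
    have : 0 <= t * d ord0 j by rewrite mulr_ge0 // ltW.
    lra.
  have minW : forall u, W u -> exists2 u0, refine_vertices (st_V s0) v (v + t *: d) u0 & vle u0 u.
    move=> u Wu; have [u0 [Wu0 u0u m0]] := minex Wfin Wu.
    by exists u0 => //; split.
  constructor => //=.
  + by exists (sq ++ map z (enum 'I_p)); move=> u /V'W /Wfin.
  + by move=> u u' [_ mu] /V'W Wu' u'u; apply: mu.
  + move=> u Hu; have Vu := HepsV _ Hu.
    have uv : u <> v by move=> e; apply: nVe; rewrite -e.
    split; first by left.
    move=> u' [[Vu' _]|[i _ <-]] u'u; first exact: Hanti.
    exfalso; apply: uv; apply/esym; apply: (Hanti u v) => //; exact: vle_trans (zge i) u'u.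
  + move=> y [/HYWN//|->]; exists x => //; by case: opt => [[]].
  + move=> u Hu; have [x0 Sx0 [Y0 h0]] := Hcert _ Hu; exists x0 => //; split => //; left; exact: Y0.
  + move=> y Yy; have [u Vu uy] := Hcov _ Yy.
    case: (pselect (u = v)) => [e|uv].
      subst u; case: Yy => y0 Sy0 fy.
      have [j hj] := key p0 d0 opt Sy0.
      have [u0 H0 u0z] := minW (z j) (or_intror (ex_intro2 _ _ j I erefl)).
      exists u0 => //; apply: vle_trans u0z _ => i; rewrite /z zE.
      case: eqP => [<-|_]; last exact: uy.
      exact: le_trans hj (fy j).
    have [u0 H0 u0u] := minW u (or_introl (conj Vu uv)).
    by exists u0 => //; apply: vle_trans u0u uy.
  + move=> u x0 [Wu _] Sx0 lt; case: Wu => [[Vu _]|[i _ e]].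
      exact: (Hno u x0 Vu Sx0 lt).
    have [j hj] := key p0 d0 opt Sx0.
    have := lt j; rewrite -e /z zE; case: eqP => _ h.
      lra.
    have dj : 0 < d ord0 j by have := d0 j; rewrite mxE.
    have : 0 <= t * d ord0 j by rewrite mulr_ge0 // ltW.
    lra.
Qed.

Lemma run_inv n (S : set 'rV[R]_n) f d eps s k s' k' :
  (0 < p)%N -> vlt 0 d ->
  alg_run S f d eps s k s' k' -> Inv S f eps s -> Inv S f eps s'.
Proof.
move=> p0 d0; elim => // s1 k1 s2 k2 s3 k3 st _ IH I1.
exact: IH (step_inv p0 d0 st I1).
Qed.

End Aux.

Theorem mainTheorem9 (R : realType) (n p : nat) (S : set 'rV[R]_n)
  (f : 'rV[R]_n -> 'rV[R]_p) (m M dhat : 'rV[R]_p) (eps : R)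
  (sfin : alg_state R p) (K : nat) :
  (2 <= p)%N ->
  S !=set0 -> convex_set S -> compact S ->
  (forall i : 'I_p, strictly_quasiconvex_on S (fun x => f x ord0 i)) ->
  (* m_i = min_{x in S} f_i(x) *)
  (forall i : 'I_p, (forall x, S x -> m ord0 i <= f x ord0 i) /\
                    (exists2 x, S x & f x ord0 i = m ord0 i)) ->
  ~ (f @` S) m ->
  (* M_i >= max_{x in S} f_i(x) *)
  (forall x, S x -> vle (f x) M) ->
  vlt 0 dhat ->
  0 <= eps ->
  (* the algorithm, started from V^0 = {m}, k = 0, runs to a state with iteration K ... *)
  alg_run S f dhat eps (alg_init m) 0%N sfin K ->
  (* ... where it terminates: V^K \ V_eps is empty *)
  st_V sfin `\` st_Veps sfin = set0 ->
  let epsv := const_mx eps : 'rV[R]_p in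
  let Yd := Ydiamond S f M in
  let L := conormal M (st_YWN sfin) in
  let U := conormal M (st_Veps sfin) in
  U = boxes_union (st_V sfin) M /\
  (L `<=` Yd /\ Yd `<=` U) /\
  (WMin Yd `<=` eps_min epsv U `&` Yd /\ eps_min epsv U `&` Yd `<=` eps_min epsv Yd) /\
  WMin L `<=` eps_min epsv Yd.
Proof.
move=> p2 _ _ _ _ hm nm hM d0 e0 run hend epsv Yd L U.
have p0 : (0 < p)%N by apply: leq_trans p2.
have I0 : Inv S f eps (alg_init m).
  constructor => //=.
  - by exists [:: m] => u /= ->; rewrite inE.
  - by move=> u u' -> ->.
  - by move=> y [x Sx fy]; exists m => // i; apply: le_trans (fy i); case: (hm i) => h _; exact: h.
  - move=> u x -> Sx lt; have := lt (Ordinal p0); case: (hm (Ordinal p0)) => h _.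
    by have := h x Sx; rewrite leNgt => /negP.
have [Hfin Hanti HepsV HYWN Hcert Hcov Hno] := run_inv p0 d0 run I0.
have HVe : st_V sfin `<=` st_Veps sfin.
  move=> u Vu; apply: contrapT => nu.
  have : (st_V sfin `\` st_Veps sfin) u by [].
  by rewrite hend.
have UV : U = boxes_union (st_V sfin) M.
  rewrite /U /conormal /boxes_union; apply/seteqP; split => y /=.
  - by move=> [[q Hq qy] yM]; exists q; [exact: HepsV | split].
  - by move=> [v Hv [vy yM]]; split=> //; exists v => //; exact: HVe.
have LYd : L `<=` Yd.
  move=> y [[q Hq qy] yM]; have [x Sx ex] := HYWN _ Hq.
  by split => //; exists x => //; rewrite ex.
have YdU : Yd `<=` U.
  move=> y [Yy yM]; rewrite UV; have [v Hv vy] := Hcov _ Yy; by exists v.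
have epsE : forall (q : 'rV[R]_p) j, (q - epsv) ord0 j = q ord0 j - eps.
  by move=> q j; rewrite !mxE.
have fxYd : forall x, S x -> Yd (f x).
  by move=> x Sx; split; [exists x | exact: hM].
split => //; split; first by split.
split; [split|].
- move=> q [Ydq nq]; split => //; split; first exact: YdU.
  move=> [q' [[u Hu uq'] _] q'q].
  have [x Sx [_ hx]] := Hcert _ Hu.
  apply: nq; exists (f x); first exact: fxYd.
  move=> j; have := q'q j; rewrite epsE => h1.
  have := hx j; have := uq' j; lra.
- move=> q [[Uq nq] Ydq]; split => //; move=> [q' Ydq' h]; apply: nq; exists q' => //.
  exact: YdU.
- move=> q [Lq nq]; split; first exact: LYd.
  move=> [q' Ydq' q'q]; have [[u Hu uq'] _] := YdU _ Ydq'.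
  have [x Sx [Yx hx]] := Hcert _ Hu.
  apply: nq; exists (f x).
    by split; [exists (f x) => // | exact: hM].
  move=> j; have := q'q j; rewrite epsE => h1.
  have := hx j; have := uq' j; lra.
Qed.
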